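(* Assume the setting in the context with $\epsilon \in (0,1)$, $\delta = \bigl(1 + \frac{k+3}{2\epsilon}\bigr)^{-1}$, $S_{\mathrm{init}} = \{e^*\}$ where $e^* \in \arg\max_{e \in \mathcal{G}} f(\{e\})$, and $\alpha = f(S_{\mathrm{init}})\,\delta / n$ (assume $f(S_{\mathrm{init}}) > 0$). Let $S \in \mathcal{I}$ be locally optimal, i.e. $\sum_{a \in A} w_{(A,B)}(a)^2 \le \sum_{b \in B} w(b)^2$ for every $k$-replacement $(A,B)$ for $S$ (for an arbitrary total order $\prec$ used to define the weights), and let $O \in \arg\max_{X \in \mathcal{I}} f(X)$. Then \[ \Bigl(\frac{k+3}{2} + \epsilon\Bigr) f(S) \;\ge\; f(O). \]
   Context: Setting. $\mathcal{G}$ is a finite ground set with $|\mathcal{G}| = n$, and $f : 2^{\mathcal{G}} \to \mathbb{R}_{\ge 0}$ is a nonnegative monotone submodular function. $\mathcal{I} \subseteq 2^{\mathcal{G}}$ is a nonempty downward-closed family that is a $k$-exchange system ($k \ge 1$): for all $A, B \in \mathcal{I}$ there is a collection $\{Y_e \subseteq B \setminus A : e \in A \setminus B\}$ such that (K1) $|Y_e| \le k$ for each $e$; (K2) every $x \in B \setminus A$ lies in at most $k$ of the sets $Y_e$; (K3) for every $C \subseteq A \setminus B$, $(B \setminus \bigcup_{e \in C} Y_e) \cup C \in \mathcal{I}$. It is assumed that every singleton $\{e\}$, $e\in\mathcal{G}$, is in $\mathcal{I}$. Weights. Given $\alpha > 0$ and a total order $\prec$ on $\mathcal{G}$: for $S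 \in \mathcal{I}$ with elements $s_1 \prec \dots \prec s_m$ and $S_i = \{s_1,\dots,s_i\}$, define $w(s_i) = \lfloor (f(S_{i-1} \cup \{s_i\}) - f(S_{i-1}))/\alpha \rfloor \alpha$. A $k$-replacement for $S$ is a pair $(A,B)$ with $B \subseteq S$, $A \subseteq \mathcal{G} \setminus (S \setminus B)$, $|A| \le k$, $|B| \le k^2 - k + 1$, and $(S \setminus B) \cup A \in \mathcal{I}$. For such a pair, write $A = \{a_1 \prec \dots \prec a_r\}$, $A_i = \{a_1,\dots,a_i\}$, and define $w_{(A,B)}(a_i) = \lfloor (f((S\setminus B) \cup A_{i-1} \cup \{a_i\}) - f((S\setminus B)\cup A_{i-1}))/\alpha \rfloor \alpha$. *)

(* Defs.v *)
(* Reals are abstracted as an arbitrary archimedean field R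
   (needed for floor); the real numbers are an instance of this. *)
From HB Require Import structures.
From mathcomp Require Import all_boot all_order all_algebra.
Set Implicit Arguments. Unset Strict Implicit. Unset Printing Implicit Defensive.
Import Order.TTheory GRing.Theory Num.Theory.
Local Open Scope ring_scope.

Section Defs.
Variables (R : archiRealFieldType) (G : finType).

Definition nonneg_fun (f : {set G} -> R) := forall A, 0 <= f A.
Definition monotone_fun (f : {set G} -> R) :=
  forall A B : {set G}, A \subset B -> f A <= f B.
Definition submodular_fun (f : {set G} -> R) :=
  forall A B : {set G}, f (A :|: B) + f (A :&: B) <= f A + f B.

Definition down_closed (I : pred {set G}) :=
  forall A B : {set G}, B \subset A -> I A -> I B.

Definition k_exchange (k : nat) (I : pred {set G}) :=
  forall A B : {set G}, I A -> I B ->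
  exists Y : G -> {set G},
    [/\ (forall e, e \in A :\: B -> Y e \subset B :\: A),
        (forall e, e \in A :\: B -> (#|Y e| <= k)%N),
        (forall x, x \in B :\: A -> (#|[set e in A :\: B | x \in Y e]| <= k)%N) &
        (forall C : {set G}, C \subset A :\: B ->
            I ((B :\: \bigcup_(e in C) Y e) :|: C))].

Definition strict_total_order (lt : rel G) :=
  [/\ irreflexive lt, transitive lt & forall x y, x != y -> lt x y || lt y x].

Definition pre (lt : rel G) (X : {set G}) (s : G) : {set G} :=
  [set x in X | lt x s].

Definition rnd (alpha t : R) : R := (Num.floor (t / alpha))%:~R * alpha.

Definition weight (f : {set G} -> R) (alpha : R) (lt : rel G) (S : {set G}) (s : G) : R :=
  rnd alpha (f (pre lt S s :|: [set s]) - f (pre lt S s)).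

Definition weight_repl (f : {set G} -> R) (alpha : R) (lt : rel G)
    (S A B : {set G}) (a : G) : R :=
  rnd alpha (f ((S :\: B) :|: pre lt A a :|: [set a]) - f ((S :\: B) :|: pre lt A a)).

Definition k_replacement (k : nat) (I : pred {set G}) (S A B : {set G}) :=
  [/\ B \subset S, [disjoint A & S :\: B], (#|A| <= k)%N,
      (#|B| <= k ^ 2 - k + 1)%N & I ((S :\: B) :|: A)].

Definition locally_optimal (k : nat) (I : pred {set G}) (f : {set G} -> R)
    (alpha : R) (lt : rel G) (S : {set G}) :=
  forall A B : {set G}, k_replacement k I S A B ->
    \sum_(a in A) (weight_repl f alpha lt S A B a) ^+ 2
      <= \sum_(b in B) (weight f alpha lt S b) ^+ 2.

End Defs.

(* Main.v *)
Require Import Defs.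
From HB Require Import structures.
From mathcomp Require Import all_boot all_order all_algebra.
From mathcomp Require Import ring lra zify.
Import Order.TTheory GRing.Theory Num.Theory.
Local Open Scope ring_scope.
Set Implicit Arguments. Unset Strict Implicit.

Lemma rnd_le (R : archiRealFieldType) (a t : R) : 0 < a -> rnd a t <= t.
Proof.
move=> a0; rewrite /rnd -ler_pdivlMr //; exact: Num.Theory.floor_le.
Qed.

Lemma rnd_ge (R : archiRealFieldType) (a t : R) : 0 < a -> t - a <= rnd a t.
Proof.
move=> a0; rewrite /rnd lerBlDr.
have h := floorD1_gt (t / a).
rewrite ltr_pdivrMr // intrD mulrDl mul1r in h; exact: ltW.
Qed.

Lemma rnd_ge0 (R : archiRealFieldType) (a t : R) : 0 < a -> 0 <= t -> 0 <= rnd a t.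
Proof.
move=> a0 t0; rewrite /rnd; apply: mulr_ge0; last exact: ltW.
rewrite ler0z floor_ge0 divr_ge0 // ltW //.
Qed.

Lemma rnd_mono (R : archiRealFieldType) (a s t : R) : 0 < a -> s <= t -> rnd a s <= rnd a t.
Proof.
move=> a0 st; rewrite /rnd ler_pM2r // ler_int le_floor // ler_pM2r // invr_gt0 //.
Qed.

Lemma marg_anti (R : archiRealFieldType) (G : finType) (f : {set G} -> R)
  (X Y : {set G}) (a : G) :
  monotone_fun f -> submodular_fun f -> X \subset Y ->
  f (Y :|: [set a]) - f Y <= f (X :|: [set a]) - f X.
Proof.
move=> mon sub XY.
case: (boolP (a \in Y)) => aY.
  have -> : Y :|: [set a] = Y by apply/setP => y; rewrite !inE; case: eqP => [->|]; rewrite ?aY ?orbF ?orbT.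
  rewrite subrr subr_ge0; apply: mon; exact: subsetUl.
have h := sub (X :|: [set a]) Y.
have e1 : X :|: [set a] :|: Y = Y :|: [set a].
  by rewrite setUAC (setUidPr XY).
have e2 : (X :|: [set a]) :&: Y = X.
  apply/setP => y; rewrite !inE; case: eqP => [->|_].
    rewrite (negbTE aY) andbF; apply/esym/negbTE; apply: contra aY; exact: (subsetP XY).
  rewrite orbF; case: (boolP (y \in X)) => // yX; by rewrite (subsetP XY y yX).
rewrite e1 e2 in h.
rewrite lerBlDr addrAC lerBrDr; by rewrite addrC [f Y + _]addrC.
Qed.

Lemma max_elt (G : finType) (lt : rel G) (T : {set G}) :
  strict_total_order lt -> T != set0 ->
  exists2 m, m \in T & forall y, y \in T -> y != m -> lt y m.
Proof.
move=> [irr tr tot] /set0Pn [x0 Hx0].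
have [mm mT mmax] : exists2 m, m \in T & forall y, y \in T -> (#|pre lt T y| <= #|pre lt T m|)%N.
  case: (@arg_maxnP _ x0 (fun i => i \in T) (fun i => #|pre lt T i|) Hx0) => /= i iT H; by exists i.
exists mm => // y yT ym.
case/orP: (tot y mm ym) => // lmy.
have : (#|pre lt T mm| < #|pre lt T y|)%N.
  apply: proper_card; apply/properP; split.
    apply/subsetP => z; rewrite !inE => /andP[zT zm]; by rewrite zT (tr _ _ _ zm lmy).
  exists mm; by rewrite !inE ?mT ?lmy // irr.
by rewrite ltnNge mmax.
Qed.

Lemma telescope (R : archiRealFieldType) (G : finType) (lt : rel G)
  (h : {set G} -> R) (T : {set G}) :
  strict_total_order lt ->
  \sum_(x in T) (h (pre lt T x :|: [set x]) - h (pre lt T x)) = h T - h set0.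
Proof.
move=> sto; have [irr tr tot] := sto.
have [n] := ubnP #|T|; elim: n T => // n IH T HT.
case: (T =P set0) => [->|/eqP Tn0]; first by rewrite big_set0 subrr.
have [m mT mmax] := @max_elt G lt T sto Tn0.
rewrite (bigD1 m) //=.
have e1 : pre lt T m = T :\ m.
  apply/setP => y; rewrite !inE; case: (eqVneq y m) => [->|ym] /=.
    by rewrite irr andbF.
  case: (boolP (y \in T)) => //= yT; exact: mmax.
have e2 : pre lt T m :|: [set m] = T.
  by rewrite e1 setUC setD1K.
have e3 : \sum_(i in T | i != m) (h (pre lt T i :|: [set i]) - h (pre lt T i))
   = \sum_(i in T :\ m) (h (pre lt (T :\ m) i :|: [set i]) - h (pre lt (T :\ m) i)).
  rewrite [RHS]big_mkcond [LHS]big_mkcond /=; apply: eq_bigr => i _.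
  rewrite in_setD1 andbC; case: ifP => // /andP[im iT].
  have -> : pre lt T i = pre lt (T :\ m) i; last by [].
  apply/setP => y; rewrite !inE; case: (eqVneq y m) => [->|] //=.
  have lim := mmax i iT im.
  apply/negbTE/negP => /andP[_ lmi]; by move: (irr i); rewrite (tr m i i lim lmi).
rewrite e3 IH; last by rewrite (cardsD1 m T) mT in HT.
rewrite e2 e1; by rewrite addrA subrK.
Qed.

Lemma max_in (R : archiRealFieldType) (G : finType) (Y : {set G}) (g : G -> R) :
  Y != set0 -> exists2 x, x \in Y & forall b, b \in Y -> g b <= g x.
Proof.
case/set0Pn => x0 H.
case: (@Order.TotalTheory.arg_maxP _ _ _ x0 (mem Y) g H) => i iY Hi.
by exists i.
Qed.

Lemma dcount (R : archiRealFieldType) (G : finType) (A : {set G})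
  (Y : G -> {set G}) (g : G -> R) :
  \sum_(o in A) \sum_(b in Y o) g b = \sum_b g b *+ #|[set o in A | b \in Y o]|.
Proof.
under eq_bigr do rewrite big_mkcond /=.
rewrite exchange_big /=; apply: eq_bigr => b _.
rewrite -big_mkcondr /= -sumr_const; apply: eq_bigl => o; by rewrite inE.
Qed.
Lemma core (R : archiRealFieldType) (G : finType) (A : {set G})
  (Y : G -> {set G}) (x : G) (u w : G -> R) :
  (forall o, o \in A -> 0 <= u o) ->
  (forall b, 0 <= w b) ->
  (forall o, o \in A -> x \in Y o) ->
  (forall o b, o \in A -> b \in Y o -> w b <= w x) ->
  \sum_(o in A) u o ^+ 2 <= \sum_(b in \bigcup_(o in A) Y o) w b ^+ 2 ->
  2 * \sum_(o in A) u o <= w x + \sum_(o in A) \sum_(b in Y o) w b.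
Proof.
move=> u0 w0 xY wmax hloc.
set P := \sum_(o in A) u o.
set U2 := \sum_(o in A) u o ^+ 2.
set Q := \sum_(o in A) \sum_(b in Y o :\ x) w b.
set N : R := #|A|%:R.
have hP0 : 0 <= P by apply: sumr_ge0.
have hQ0 : 0 <= Q by apply: sumr_ge0 => o _; apply: sumr_ge0.
have hsplit : \sum_(o in A) \sum_(b in Y o) w b = N * w x + Q.
  rewrite /Q /N mulr_natl -sumr_const -big_split /=; apply: eq_bigr => o oA.
  by rewrite (big_setD1 _ (xY o oA)).
have h2 : \sum_(b in \bigcup_(o in A) Y o) w b ^+ 2
    <= w x ^+ 2 + \sum_(o in A) \sum_(b in Y o :\ x) w b ^+ 2.
  rewrite dcount.
  have -> : w x ^+ 2 = \sum_b w b ^+ 2 *+ (b == x).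
    rewrite (bigD1 x) //= eqxx mulr1n big1 ?addr0 // => b /negbTE ->; by rewrite mulr0n.
  rewrite -big_split /= big_mkcond /=; apply: ler_sum => b _.
  rewrite -mulrnDr; case: ifP => [/bigcupP [o oA bY]|_]; last first.
    by rewrite mulrn_wge0 // exprn_ge0.
  rewrite -mulr_natr ler_peMr ?exprn_ge0 // ler1n.
  case: (eqVneq b x) => [_|bx] //=.
  rewrite add0n card_gt0; apply/set0Pn; exists o; by rewrite !inE oA bx.
have h3 : \sum_(o in A) \sum_(b in Y o :\ x) w b ^+ 2 <= w x * Q.
  rewrite /Q mulr_sumr; apply: ler_sum => o oA; rewrite mulr_sumr; apply: ler_sum => b.
  rewrite inE => /andP[_ bY]; rewrite expr2; apply: ler_wpM2r => //; exact: wmax bY.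
have h1 : U2 <= w x ^+ 2 + w x * Q by apply: (le_trans hloc); apply: (le_trans h2); rewrite lerD2l.
have h4 : 2 * w x * P <= U2 + N * w x ^+ 2.
  have : \sum_(o in A) (2 * w x * u o) <= \sum_(o in A) (u o ^+ 2 + w x ^+ 2).
    apply: ler_sum => o oA; have := sqr_ge0 (u o - w x); rewrite !expr2; nra.
  rewrite big_split /= sumr_const -mulr_sumr -mulr_natl mulr1 => h; rewrite -mulr_natl in h; rewrite /P /U2 /N; lra.
rewrite hsplit.
have [wx0|wxp] := eqVneq (w x) 0.
  have U20 : U2 = 0.
    apply/eqP; rewrite eq_le; apply/andP; split; last by apply: sumr_ge0 => o _; exact: sqr_ge0.
    rewrite wx0 in h1; lra.
  have P0 : P = 0.
    apply: big1 => o oA.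
    have := @psumr_eq0P _ _ _ (fun i => u i ^+ 2) (fun i _ => sqr_ge0 (u i)) U20 o oA.
    by move/eqP; rewrite sqrf_eq0 => /eqP.
  rewrite P0 wx0; lra.
have wpos : 0 < w x by rewrite lt_def wxp w0.
rewrite -(ler_pM2l wpos).
have : w x * (2 * P) <= w x * (w x + (N * w x + Q)).
  have -> : w x * (2 * P) = 2 * w x * P by ring.
  apply: (le_trans h4).
  have -> : w x * (w x + (N * w x + Q)) = (w x ^+ 2 + w x * Q) + N * w x ^+ 2 by ring.
  by rewrite lerD2r.
by [].
Qed.

Lemma card_bigcup_le (G : finType) (A : {set G}) (F : G -> {set G}) :
  (#|\bigcup_(o in A) F o| <= \sum_(o in A) #|F o|)%N.
Proof.
elim/big_rec2: _ => [|i U n _ IH]; first by rewrite cards0.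
apply: leq_trans (leq_card_setU _ _).1 _; by rewrite leq_add2l.
Qed.

Lemma sub_sum (R : archiRealFieldType) (G : finType) (A B : {set G}) (F : G -> R) :
  A \subset B -> (forall x, x \in B -> 0 <= F x) ->
  \sum_(x in A) F x <= \sum_(x in B) F x.
Proof.
move=> AB F0; rewrite [X in _ <= X](big_setID A) /= (setIidPr AB) lerDl.
apply: sumr_ge0 => x; rewrite inE => /andP[_ xB]; exact: F0.
Qed.

Lemma part_sum (R : archiRealFieldType) (G : finType) (D T : {set G})
  (p : G -> G) (F : G -> R) : (forall o, o \in D -> p o \in T) ->
  \sum_(o in D) F o = \sum_(x in T) \sum_(o in [set o in D | p o == x]) F o.
Proof.
move=> hp; rewrite (partition_big p (fun x => x \in T)) //=.
apply: eq_bigr => x _; apply: eq_bigl => o; by rewrite inE.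
Qed.

Unset Implicit Arguments. Set Strict Implicit.

Theorem mainTheorem4 (R : archiRealFieldType) (G : finType)
  (f : {set G} -> R) (I : pred {set G}) (k : nat) (lt : rel G)
  (eps delta alpha : R) (estar : G) (S O : {set G}) :
  nonneg_fun f -> monotone_fun f -> submodular_fun f ->
  (exists X, I X) -> down_closed I -> (1 <= k)%N -> k_exchange k I ->
  (forall e : G, I [set e]) ->
  strict_total_order lt ->
  0 < eps -> eps < 1 ->
  delta = (1 + (k%:R + 3) / (2 * eps))^-1 ->
  (forall e : G, f [set e] <= f [set estar]) ->
  0 < f [set estar] ->
  alpha = f [set estar] * delta / #|G|%:R ->
  I S -> locally_optimal k I f alpha lt S ->
  I O -> (forall X, I X -> f X <= f O) ->
  ((k%:R + 3) / 2 + eps) * f S >= f O.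
Proof.
move=> f0 mon sub _ _ k1 kex single sto eps0 eps1 hdelta hmax hest halpha IS loc IO Omax.
have n0 : (0 < #|G|)%N by apply/card_gt0P; exists estar.
have delta0 : 0 < delta.
  rewrite hdelta invr_gt0; apply: ltr_wpDr; last exact: ltr01.
  apply: divr_ge0; first by apply: addr_ge0; [exact: ler0n| lra].
  apply: mulr_ge0; [lra | exact: ltW].
have alpha0 : 0 < alpha.
  by rewrite halpha divr_gt0 // ?mulr_gt0 // ltr0n.
have marg0 : forall X a, 0 <= f (X :|: [set a]) - f X.
  by move=> X a; rewrite subr_ge0; apply: mon; exact: subsetUl.
pose w := weight f alpha lt S.
have w0 : forall b, 0 <= w b by move=> b; apply: rnd_ge0.
pose O' := O :\: S.
pose S' := S :\: O.
have [Y [hY1 hY2 hY3 hY4]] := kex O S IO IS.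
pose u o := rnd alpha (f (S :|: pre lt O' o :|: [set o]) - f (S :|: pre lt O' o)).
have u0 : forall o, 0 <= u o by move=> o; apply: rnd_ge0.
have uW : forall (A B : {set G}) a, A \subset O' -> a \in A -> u a <= weight_repl f alpha lt S A B a.
  move=> A B a AO aA; apply: rnd_mono => //; apply: marg_anti => //.
  apply/subsetP => y; rewrite !inE => /orP[/andP[_ yS]|/andP[yA ly]]; first by rewrite yS.
  move: (subsetP AO y yA); rewrite !inE => /andP[-> ->]; by rewrite ly orbT.
have uz : forall o, o \in O' -> Y o = set0 -> u o = 0.
  move=> o oO Yo.
  have rep : k_replacement k I S [set o] set0.
    split.
    - exact: sub0set.
    - by rewrite setD0 disjoints1; move: oO; rewrite inE => /andP[].
    - by rewrite cards1.
    - by rewrite cards0.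
    - have := hY4 [set o]; rewrite sub1set big_set1 Yo !setD0; exact.
  have := loc _ _ rep; rewrite big_set1 big_set0 => h.
  have := uW [set o] set0 o _ (set11 o); rewrite sub1set => /(_ oO) h2.
  have := u0 o; rewrite expr2 in h; move=> hu; apply/eqP; rewrite eq_le hu andbT; nra.
pose nn o := if [pick x in Y o | [forall b in Y o, w b <= w x]] is Some x then x else o.
have nnP : forall o, Y o != set0 -> nn o \in Y o /\ forall b, b \in Y o -> w b <= w (nn o).
  move=> o Yo; rewrite /nn; case: pickP => [x /andP[xY /forallP H]|H].
    split=> // b bY; by have := H b; rewrite bY.
  have [x xY xmax] := max_in w Yo.
  move: (H x); rewrite xY /= => /negP; case; apply/forallP => b; apply/implyP => /xmax //.
pose O'' := [set o in O' | Y o != set0].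
have sumO : \sum_(o in O') u o = \sum_(o in O'') u o.
  rewrite (big_setID O'') /= (setIidPr _); last by apply/subsetP => o; rewrite inE => /andP[].
  rewrite [X in _ + X]big1 ?addr0 // => o /setDP [oO oO''].
  case: (eqVneq (Y o) set0) => Hy; first exact: uz.
  by move: oO''; rewrite inE oO Hy.
have hp : forall o, o \in O'' -> nn o \in S'.
  move=> o; rewrite inE => /andP[oO Yo]; have [h _] := nnP o Yo; exact: (subsetP (hY1 o oO)).
pose Ax x := [set o in O'' | nn o == x].
have AxO : forall x, Ax x \subset O'.
  by move=> x; apply/subsetP => o; rewrite !inE => /andP[/andP[]].
have perx : forall x, x \in S' -> 2 * \sum_(o in Ax x) u o <= w x + \sum_(o in Ax x) \sum_(b in Y o) w b.
  move=> x xS.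
  have xY : forall o, o \in Ax x -> nn o = x /\ Y o != set0.
    by move=> o; rewrite !inE => /andP[/andP[_ ->] /eqP].
  apply: core => //.
  - by move=> o /xY [<- Yo]; case: (nnP o Yo).
  - by move=> o b /xY [<- Yo] bY; case: (nnP o Yo) => _; apply.
  have hA : (#|Ax x| <= k)%N.
    apply: leq_trans (hY3 x xS); apply: subset_leq_card; apply/subsetP => o oA.
    rewrite inE (subsetP (AxO x) o oA) /=; have [<- Yo] := xY o oA; by case: (nnP o Yo).
  have rep : k_replacement k I S (Ax x) (\bigcup_(o in Ax x) Y o).
    split.
    - apply/bigcupsP => o oA; apply: subset_trans (hY1 o _) _; [exact (subsetP (AxO x) o oA) | exact: subsetDl].
    - rewrite disjoint_subset; apply/subsetP => y /(subsetP (AxO x)).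
      by rewrite !inE => /andP[yS _]; rewrite (negbTE yS) andbF.
    - exact: hA.
    - have sB : \bigcup_(o in Ax x) Y o \subset x |: \bigcup_(o in Ax x) (Y o :\ x).
        apply/bigcupsP => o oA; apply/subsetP => b bY; rewrite in_setU1.
        case: eqVneq => //= bx; apply/bigcupP; exists o => //; by rewrite !inE bx bY.
      have cY : forall o, o \in Ax x -> (#|Y o :\ x| <= k.-1)%N.
        move=> o oA; have [<- Yo] := xY o oA; have [nY _] := nnP o Yo.
        have := hY2 o (subsetP (AxO x) o oA); rewrite (cardsD1 (nn o)) nY => h; lia.
      apply: leq_trans (subset_leq_card sB) _.
      rewrite cardsU1; apply: leq_trans (leq_add (leq_b1 _) (card_bigcup_le _ _)) _.
      have : (\sum_(o in Ax x) #|Y o :\ x| <= \sum_(o in Ax x) k.-1)%N by apply: leq_sum.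
      rewrite sum_nat_const => hs; nia.
    - exact: hY4 _ (AxO x).
  apply: le_trans (loc _ _ rep); apply: ler_sum => o oA.
  have h := uW _ (\bigcup_(o in Ax x) Y o) o (AxO x) oA; have := u0 o; rewrite !expr2; nra.
have hcnt : \sum_(o in O') \sum_(b in Y o) w b <= k%:R * \sum_(x in S') w x.
  rewrite dcount mulr_sumr [X in _ <= X]big_mkcond /=; apply: ler_sum => b _; case: ifP => bS.
    rewrite mulr_natl; apply: (ler_wpMn2l (w0 b)); exact: hY3 b bS.
  have -> : #|[set o in O' | b \in Y o]| = 0%N.
    apply/eqP; rewrite cards_eq0; apply/eqP/setP => o; rewrite in_set0 in_set.
    apply/negbTE/negP => /andP[oO bY]; by rewrite (subsetP (hY1 o oO) b bY) in bS.
  by rewrite mulr0n.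
have hsum : 2 * \sum_(o in O') u o <= (k%:R + 1) * \sum_(x in S') w x.
  rewrite sumO (@part_sum _ _ O'' S' nn u hp) mulr_sumr.
  apply: le_trans (ler_sum _ perx) _.
  rewrite big_split /= -(@part_sum _ _ O'' S' nn (fun o => \sum_(b in Y o) w b) hp).
  have : \sum_(o in O'') \sum_(b in Y o) w b <= \sum_(o in O') \sum_(b in Y o) w b.
    apply: sub_sum; first by apply/subsetP => o; rewrite inE => /andP[].
    by move=> o _; apply: sumr_ge0.
  move: hcnt; set a := \sum_(x in S') w x; set b := \sum_(o in O') _; set c := \sum_(o in O'') _.
  move=> h1 h2; rewrite mulrDl mul1r addrC lerD2r; exact: le_trans h2 h1.
have hwS : \sum_(x in S') w x <= f S.
  apply: le_trans (sub_sum (subsetDl S O) (fun x _ => w0 x)) _.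
  have : \sum_(x in S) w x <= f S - f set0.
    rewrite -(telescope f S sto); apply: ler_sum => x _; exact: rnd_le.
  have := f0 set0; lra.
have htel : f (S :|: O') - f S <= \sum_(o in O') u o + #|O'|%:R * alpha.
  have := telescope (fun X => f (S :|: X)) O' sto; rewrite /= setU0 => <-.
  rewrite mulr_natl -sumr_const -big_split /=; apply: ler_sum => o _; rewrite /u !setUA.
  have := rnd_ge (f (S :|: pre lt O' o :|: [set o]) - f (S :|: pre lt O' o)) alpha0; lra.
have hOS : f O <= f (S :|: O').
  apply: mon; apply/subsetP => y yO; by rewrite !inE yO andbT orbN.
have hfO : f [set estar] <= f O by apply: Omax.
have hna : #|O'|%:R * alpha <= delta * f O.
  apply: (@le_trans _ _ (#|G|%:R * alpha)).
    by apply: (ler_wpM2r (ltW alpha0)); rewrite ler_nat max_card.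
  rewrite halpha mulrC divfK ?pnatr_eq0 -?lt0n // mulrC; apply: ler_wpM2l => //; exact: ltW.
set K : R := k%:R.
have K0 : 0 <= K by exact: ler0n.
have hkw : (K + 1) * \sum_(x in S') w x <= (K + 1) * f S by apply: ler_wpM2l => //; lra.
have key : f O <= (K + 3) / 2 * f S + delta * f O by lra.
have hd : delta * (2 * eps + K + 3) = 2 * eps.
  rewrite hdelta; field; lra.
have h1 : f O * (K + 3) <= ((K + 3) / 2 + eps) * f S * (K + 3).
  have : (2 * eps + K + 3) * f O <= (2 * eps + K + 3) * ((K + 3) / 2 * f S + delta * f O).
    by apply: ler_wpM2l => //; lra.
  nra.
by rewrite ler_pM2r in h1 => //; lra.
Qed.
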